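(* Let $(M,\omega)$ be a compact Kähler manifold of complex dimension $n$, $\chi$ a closed real $(1,1)$-form, and $\theta_0\in(0,\pi)$ the argument of $\int_M(\chi+\sqrt{-1}\omega)^n$. Let $\underline u$ be a smooth real function on $M$ with $$A_0:=\max_M\max_{1\le j\le n}\sum_{i\neq j}\operatorname{arccot}\lambda_i(\chi_{\underline u})<\theta_0\quad\text{and}\quad B_0:=\max_M\theta(\chi_{\underline u})<\pi.$$ Then the function $\underline u(x,t):=\underline u(x)$ on $M\times[0,\infty)$ is a subsolution of the parabolic equation $u_t=\cot\theta(\chi_u)-\cot\theta_0$ in the following sense: there exist constants $\delta>0$ and $K>0$ such that for every $(x,t)\in M\times[0,\infty)$ the set $$S_\delta(x,t):=\{(\mu,\tau)\in\mathbb R^n\times\mathbb R:\ \cot\theta\bigl(\lambda(\chi_{\underline u})(x)+\mu\bigr)-\underline u_t(x,t)+\tau=\cot\theta_0,\ \mu_i>-\delta\ \forall i,\ \tau>-\delta\}$$ is contained in the ball of radius $K$ centered at the origin of $\mathbb R^{n+1}$.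
   Context: $\chi_u:=\chi+\sqrt{-1}\partial\bar\partial u$; $\lambda(\chi_u)=(\lambda_1,\dots,\lambda_n)$ are the eigenvalues of $\chi_u$ with respect to $\omega$; $\operatorname{arccot}$ takes values in $(0,\pi)$; for $\lambda\in\mathbb R^n$, $\theta(\lambda):=\sum_i\operatorname{arccot}\lambda_i$ and $\theta(\chi_u):=\theta(\lambda(\chi_u))$. Here $\underline u_t\equiv 0$ since $\underline u$ is time-independent. *)

(* Defs.v *)
From Stdlib Require Import Reals.
Open Scope R_scope.

(* arccot with values in (0, pi). *)
Definition arccot (x : R) : R := PI / 2 - atan x.

Definition cot (t : R) : R := cos t / sin t.

Fixpoint sumR (n : nat) (f : nat -> R) : R :=
  match n with
  | O => 0
  | S k => sumR k f + f k
  end.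

(* vectors of R^n are represented as functions nat -> R; only indices < n matter *)

Definition theta (n : nat) (l : nat -> R) : R := sumR n (fun i => arccot (l i)).

Definition theta_except (n : nat) (l : nat -> R) (j : nat) : R :=
  sumR n (fun i => if Nat.eqb i j then 0 else arccot (l i)).

Definition norm_nt (n : nat) (mu : nat -> R) (tau : R) : R :=
  sqrt (sumR n (fun i => mu i ^ 2) + tau ^ 2).

Definition vadd (l m : nat -> R) : nat -> R := fun i => l i + m i.

(* Main.v *)
Require Import Defs.
From Stdlib Require Import Reals Lra Lia.
Open Scope R_scope.

Lemma arccot_bound y : 0 < arccot y < PI.
Proof. unfold arccot. pose proof (atan_bound y). lra. Qed.

Lemma arccot_lt x y : x < y -> arccot y < arccot x.
Proof. unfold arccot. intros H. pose proof (atan_increasing _ _ H). lra. Qed.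

Lemma arccot_le x y : x <= y -> arccot y <= arccot x.
Proof. intros [H|H]. apply Rlt_le, arccot_lt, H. subst; lra. Qed.

Lemma arccot_cot t : 0 < t < PI -> arccot (cot t) = t.
Proof.
  intros H. unfold arccot, cot.
  replace (cos t / sin t) with (tan (PI/2 - t)).
  - rewrite atan_tan; lra.
  - unfold tan. rewrite sin_shift, cos_shift. reflexivity.
Qed.

Lemma cot_lt a b : 0 < a -> a < b -> b < PI -> cot b < cot a.
Proof.
  intros. destruct (Rlt_or_le (cot b) (cot a)) as [h|h]; auto.
  apply arccot_le in h. rewrite !arccot_cot in h; lra.
Qed.

Lemma cot_le a b : 0 < a -> a <= b -> b < PI -> cot b <= cot a.
Proof. intros ? [h|h] ?. apply Rlt_le, cot_lt; auto. subst; lra. Qed.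

Lemma lt_cot y c : 0 < c < PI -> c < arccot y -> y < cot c.
Proof.
  intros Hc H. destruct (Rlt_or_le y (cot c)) as [h|h]; auto.
  apply arccot_le in h. rewrite arccot_cot in h; lra.
Qed.

Lemma atan_lip x y : x <= y -> atan y - atan x <= y - x.
Proof.
  intros [H|H]; [|subst; lra].
  destruct (MVT_cor2 atan (fun x => / (1 + x^2)) x y H) as [c [E _]].
  { intros; apply derivable_pt_lim_atan. }
  rewrite E.
  assert (0 < / (1 + c^2) <= 1).
  { split. apply Rinv_0_lt_compat. nra.
    rewrite <- Rinv_1. apply Rinv_le_contravar; nra. }
  nra.
Qed.

Lemma arccot_shift l m d : 0 < d -> m > - d -> arccot (l + m) <= arccot l + d.
Proof.
  intros Hd Hm. destruct (Rle_or_lt 0 m).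
  - pose proof (arccot_le l (l+m) ltac:(lra)). lra.
  - unfold arccot. pose proof (atan_lip (l+m) l ltac:(lra)). lra.
Qed.

Lemma sumR_le n f g : (forall i, (i < n)%nat -> f i <= g i) -> sumR n f <= sumR n g.
Proof.
  induction n; simpl; intros H. lra.
  pose proof (H n ltac:(lia)). assert (sumR n f <= sumR n g) by (apply IHn; intros; apply H; lia). lra.
Qed.

Lemma sumR_ext n f g : (forall i, (i < n)%nat -> f i = g i) -> sumR n f = sumR n g.
Proof.
  induction n; simpl; intros H. lra.
  rewrite (H n ltac:(lia)), IHn; auto.
Qed.

Lemma sumR_addc n f c : sumR n (fun i => f i + c) = sumR n f + INR n * c.
Proof. induction n. simpl; lra. cbn [sumR]. rewrite IHn, S_INR. lra. Qed.

Lemma sumR_const n c : sumR n (fun _ => c) = INR n * c.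
Proof. induction n. simpl; lra. cbn [sumR]. rewrite IHn, S_INR. lra. Qed.

Lemma sumR_pos n f : (1 <= n)%nat -> (forall i, (i < n)%nat -> 0 < f i) -> 0 < sumR n f.
Proof.
  induction n; simpl; intros Hn H. lia.
  pose proof (H n ltac:(lia)).
  destruct n. simpl; lra.
  assert (0 < sumR (S n) f) by (apply IHn; [lia| intros; apply H; lia]). lra.
Qed.

Lemma sumR_nonneg n f : (forall i, (i < n)%nat -> 0 <= f i) -> 0 <= sumR n f.
Proof.
  induction n; simpl; intros H. lra.
  pose proof (H n ltac:(lia)). assert (0 <= sumR n f) by (apply IHn; intros; apply H; lia). lra.
Qed.

Lemma sumR_split n f j : (j < n)%nat ->
  sumR n f = sumR n (fun i => if Nat.eqb i j then 0 else f i) + f j.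
Proof.
  induction n; simpl; intros Hj. lia.
  destruct (Nat.eq_dec j n) as [->|Hne].
  - rewrite Nat.eqb_refl.
    rewrite (sumR_ext n (fun i => if Nat.eqb i n then 0 else f i) f). lra.
    intros i Hi. destruct (Nat.eqb_spec i n). lia. auto.
  - destruct (Nat.eqb_spec n j). lia. rewrite (IHn ltac:(lia)). lra.
Qed.

Theorem lemma2p7 (M : Type) (n : nat) (Hn : (1 <= n)%nat)
  (lam : M -> nat -> R) (theta0 : R)
  (Htheta0 : 0 < theta0 < PI)
  (A0 B0 : R)
  (HA0max : (forall x j, (j < n)%nat -> theta_except n (lam x) j <= A0) /\
            (exists x j, (j < n)%nat /\ theta_except n (lam x) j = A0))
  (HB0max : (forall x, theta n (lam x) <= B0) /\
            (exists x, theta n (lam x) = B0))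
  (HA0 : A0 < theta0) (HB0 : B0 < PI) :
  exists delta K : R, 0 < delta /\ 0 < K /\
    forall (x : M) (t : R), 0 <= t ->
    forall (mu : nat -> R) (tau : R),
      cot (theta n (vadd (lam x) mu)) - 0 + tau = cot theta0 ->
      (forall i, (i < n)%nat -> mu i > - delta) ->
      tau > - delta ->
      norm_nt n mu tau <= K.
Proof.
  destruct HA0max as [HA [xa [ja [Hja EA]]]].
  destruct HB0max as [HB [xb EB]].
  assert (A0pos : 0 <= A0).
  { rewrite <- EA. unfold theta_except. apply sumR_nonneg. intros i _.
    destruct (Nat.eqb i ja). lra. pose proof (arccot_bound (lam xa i)); lra. }
  assert (B0pos : 0 < B0).
  { rewrite <- EB. unfold theta. apply sumR_pos; auto. intros i _.
    pose proof (arccot_bound (lam xb i)); lra. }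
  set (N := INR n).
  assert (HN : 1 <= N). { unfold N. apply (le_INR 1); auto. }
  set (T := (A0 + theta0) / 2).
  assert (HT : 0 < T < theta0) by (unfold T; lra).
  set (gap := cot T - cot theta0).
  assert (Hgap : 0 < gap). { unfold gap. pose proof (cot_lt T theta0 ltac:(lra) ltac:(lra) ltac:(lra)). lra. }
  set (delta := Rmin 1 (Rmin ((PI-B0)/(2*N)) (Rmin ((T-A0)/(2*N)) gap))).
  assert (Hd1 : delta <= (PI-B0)/(2*N)).
  { unfold delta. eapply Rle_trans. apply Rmin_r. apply Rmin_l. }
  assert (Hd2 : delta <= (T-A0)/(2*N)).
  { unfold delta. eapply Rle_trans. apply Rmin_r. eapply Rle_trans. apply Rmin_r. apply Rmin_l. }
  assert (Hd3 : delta <= gap).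
  { unfold delta. eapply Rle_trans. apply Rmin_r. eapply Rle_trans. apply Rmin_r. apply Rmin_r. }
  assert (Hdpos : 0 < delta).
  { unfold delta, T in *. repeat apply Rmin_glb_lt; try lra; apply Rdiv_lt_0_compat; lra. }
  assert (HNd1 : N * delta <= (PI - B0)/2).
  { replace ((PI - B0)/2) with (N*((PI-B0)/(2*N))) by (field; lra).
    apply Rmult_le_compat_l; lra. }
  assert (HNd2 : N * delta <= (T - A0)/2).
  { replace ((T - A0)/2) with (N*((T-A0)/(2*N))) by (field; lra).
    apply Rmult_le_compat_l; lra. }
  set (c := (T - A0) / 2).
  set (U := (B0 + PI) / 2).
  set (Q := delta + Rabs (cot c - cot B0)).
  set (Q' := delta + Rabs (cot theta0 - cot U)).
  exists delta, (sqrt (N * Q^2 + Q'^2) + 1).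
  split; [exact Hdpos|]. split.
  { pose proof (sqrt_pos (N * Q^2 + Q'^2)). lra. }
  intros x t _ mu tau Heq Hmu Htau.
  set (l := lam x).
  change (lam x) with l in Heq.
  set (thm := theta n (vadd l mu)) in *.
  assert (Hthm1 : thm <= theta n l + N * delta).
  { unfold thm, theta, vadd, N. rewrite <- sumR_addc. apply sumR_le.
    intros i Hi. apply arccot_shift; auto. }
  pose proof (HB x) as HBx. fold l in HBx.
  assert (Hthm0 : 0 < thm).
  { unfold thm, theta. apply sumR_pos; auto. intros i _. apply arccot_bound. }
  assert (HthmU : thm <= U).
  { unfold U. lra. }
  assert (HcU : cot U <= cot thm) by (apply cot_le; unfold U in *; lra).
  assert (Htau_abs : Rabs tau <= Q').
  { unfold Q'. apply Rabs_le. pose proof (Rabs_pos (cot theta0 - cot U)).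
    pose proof (Rle_abs (cot theta0 - cot U)). lra. }
  assert (HthmT : T < thm).
  { destruct (Rlt_or_le T thm) as [h|h]; auto.
    pose proof (cot_le thm T Hthm0 h ltac:(lra)). unfold gap in Hd3. lra. }
  assert (Hmu_abs : forall j, (j < n)%nat -> mu j ^ 2 <= Q ^ 2).
  { intros j Hj.
    assert (Hexc : theta_except n (vadd l mu) j <= theta_except n l j + N * delta).
    { unfold theta_except, vadd, N. rewrite <- sumR_addc. apply sumR_le.
      intros i Hi. destruct (Nat.eqb i j). lra. apply arccot_shift; auto. }
    pose proof (HA x j Hj) as HAx. fold l in HAx.
    pose proof (sumR_split n (fun i => arccot (vadd l mu i)) j Hj) as Hs.
    fold (theta n (vadd l mu)) in Hs. fold thm in Hs.
    change (sumR n (fun i => if Nat.eqb i j then 0 else arccot (vadd l mu i)))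
      with (theta_except n (vadd l mu) j) in Hs.
    assert (Hc : c < arccot (l j + mu j)).
    { assert (E : thm = theta_except n (vadd l mu) j + arccot (l j + mu j)) by exact Hs. unfold c. lra. }
    assert (Hup : l j + mu j < cot c) by (apply lt_cot; auto; unfold c, T in *; lra).
    assert (Hlow : cot B0 <= l j).
    { destruct (Rlt_or_le (l j) (cot B0)) as [h|h]; auto.
      apply arccot_lt in h. rewrite arccot_cot in h by lra.
      pose proof (sumR_split n (fun i => arccot (l i)) j Hj) as Hs2.
      assert (0 <= sumR n (fun i => if Nat.eqb i j then 0 else arccot (l i))).
      { apply sumR_nonneg. intros i _. destruct (Nat.eqb i j). lra.
        pose proof (arccot_bound (l i)); lra. }
      unfold theta in HBx. lra. }
    pose proof (Hmu j Hj).
    pose proof (Rabs_pos (cot c - cot B0)). pose proof (Rle_abs (cot c - cot B0)).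
    assert (-Q <= mu j <= Q) by (unfold Q; lra).
    nra. }
  unfold norm_nt.
  assert (sqrt (sumR n (fun i => mu i ^ 2) + tau ^ 2) <= sqrt (N * Q^2 + Q'^2)).
  { apply sqrt_le_1_alt.
    assert (sumR n (fun i => mu i ^ 2) <= N * Q^2).
    { unfold N. rewrite <- sumR_const. apply sumR_le. exact Hmu_abs. }
    assert (tau ^ 2 <= Q'^2).
    { pose proof (Rabs_pos tau). rewrite <- (pow2_abs tau). nra. }
    lra. }
  lra.
Qed.
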